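(* Let $\theta$ be a labelled tree (as defined below) such that $\Psi_{n_\ell}(\omega\cdot\nu_\ell)\neq0$ for every line $\ell$ of $\theta$ with $n_\ell\ge0$, and let $T$ be a self-energy cluster of $\theta$ on scale $n\ge0$ which is renormalised, i.e. no subgraph of $T$ is a self-energy cluster of $\theta$. Then for every $0\le p\le n$, $$\mathfrak{N}_p(T)\le 2^{-(m_p-2)}K(T),$$ where $\mathfrak{N}_p(T)$ is the number of lines of $T$ with scale $\ge p$ and $K(T):=\sum_{v\in N(T)}|\nu_v|$, $N(T)$ being the set of nodes of $T$.
   Context: Notation: $\omega\in\mathbb{R}^d$ satisfies the Bryuno condition; $\alpha_m(\omega):=\inf_{0<|\nu|\le2^m}|\omega\cdot\nu|$ with $|\nu|$ the $\ell^1$ norm; $m_0=0$, $m_{n+1}=m_n+p_n+1$ with $p_n:=\max\{q\ge0:\alpha_{m_n}(\omega)<2\alpha_{m_n+q}(\omega)\}$. $\chi$ is an even $C^\infty$ function, non-increasing in $|x|$, equal to $1$ for $|x|\le1/2$ and $0$ for $|x|\ge1$; $\chi_{-1}\equiv1$, $\chi_n(x)=\chi(4x/\alpha_{m_n}(\omega))$, $\psi_n=1-\chi_n$ ($n\ge0$), $\Psi_n=\chi_{n-1}\psi_n$ ($n\ge0$); thus $\Psi_n(x)\neq0$ implies $\alpha_{m_n}(\omega)/8<|x|<\alpha_{m_{n-1}}(\omega)/4$ (with $\alpha_{m_{-1}}:=+\infty$). Trees: a tree $\theta$ is a finite rooted tree whose root has exactly one incident line (the root line); all other vertices are nodes; lines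 are oriented toward the root, and each line $\ell=\ell_v$ is identified with the node $v$ it leaves. Write $w\preceq v$ if $v$ lies on the path from $w$ to the root. Each node $v$ carries a mode $\nu_v\in\mathbb{Z}^d$; each line $\ell_v$ carries the momentum $\nu_{\ell_v}=\sum_{w\preceq v}\nu_w$, required to be nonzero for all lines except possibly the root line; each line carries a scale $n_\ell$, with $n_\ell=-1$ if $\nu_\ell=0$ and $n_\ell\in\{0,1,2,\dots\}$ otherwise. A cluster on scale $n$ is a maximal connected subgraph (set of nodes together with the lines of $\theta$ joining them) all of whose lines have scale $\le n$ and at least one line of which has scale $n$; a line enters (exits) a subgraph $T$ if it connects a node outside $T$ to a node in $T$ (a node in $T$ to a node outside). A self-energy cluster is either a cluster with exactly one entering line $\ell'$ and one exiting line $\ell$ satisfying $\nu_\ell=\nu_{\ell'}$, or (scale $-1$) a single node $v$ with $\nu_v=0$ having exactly one entering line. *)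

(* Defs.v *)
From Stdlib Require Import Reals ZArith Arith List Bool.
Import ListNotations.
Open Scope R_scope.

(* A vector of Z^d is represented by a function nat -> Z of which only the
   components 0..d-1 are meaningful; all notions below only look at those. *)
Definition vec := nat -> Z.

Definition Zsum (l : list nat) (f : nat -> Z) : Z :=
  fold_right (fun i acc => (f i + acc)%Z) 0%Z l.
Definition Rsum (l : list nat) (f : nat -> R) : R :=
  fold_right (fun i acc => f i + acc) 0 l.

Definition dot (d : nat) (omega : nat -> R) (nu : vec) : R :=
  Rsum (seq 0 d) (fun i => omega i * IZR (nu i)).
Definition norm1 (d : nat) (nu : vec) : Z :=
  Zsum (seq 0 d) (fun i => Z.abs (nu i)).
Definition vnonzero (d : nat) (nu : vec) : Prop :=
  exists i, (i < d)%nat /\ nu i <> 0%Z.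
Definition vzero (d : nat) (nu : vec) : Prop :=
  forall i, (i < d)%nat -> nu i = 0%Z.
Definition veq (d : nat) (nu mu : vec) : Prop :=
  forall i, (i < d)%nat -> nu i = mu i.

(* ---------- alpha_m(omega) = inf_{0<|nu|<=2^m} |omega.nu| ---------- *)
(* The set of such nu is finite; we enumerate the box [-2^m,2^m]^d. *)
Definition Zrange (B : Z) : list Z :=
  map (fun k => (Z.of_nat k - B)%Z) (seq 0 (Z.to_nat (2 * B + 1))).
Fixpoint boxlists (d : nat) (B : Z) : list (list Z) :=
  match d with
  | O => [[]]
  | S d' => flat_map (fun z => map (cons z) (boxlists d' B)) (Zrange B)
  end.
Definition vec_of_list (l : list Z) : vec := fun i => nth i l 0%Z.
Definition nonzerob (d : nat) (nu : vec) : bool :=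
  existsb (fun i => negb (Z.eqb (nu i) 0)) (seq 0 d).
Definition alpha_candidates (d m : nat) : list vec :=
  filter (fun nu => nonzerob d nu && Z.leb (norm1 d nu) (2 ^ Z.of_nat m))
         (map vec_of_list (boxlists d (2 ^ Z.of_nat m))).
Definition Rmin_list (l : list R) : R :=
  match l with [] => 0 | x :: xs => fold_right Rmin x xs end.
Definition alpha (d : nat) (omega : nat -> R) (m : nat) : R :=
  Rmin_list (map (fun nu => Rabs (dot d omega nu)) (alpha_candidates d m)).

Definition bryuno (d : nat) (omega : nat -> R) : Prop :=
  (forall m, 0 < alpha d omega m) /\
  exists l, Un_cv (fun M => sum_f_R0 (fun k => ln (/ alpha d omega k) / 2 ^ k) M) l.

Definition is_pn (d : nat) (omega : nat -> R) (mn q : nat) : Prop :=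
  alpha d omega mn < 2 * alpha d omega (mn + q) /\
  forall q', alpha d omega mn < 2 * alpha d omega (mn + q') -> (q' <= q)%nat.
Definition is_mseq (d : nat) (omega : nat -> R) (m : nat -> nat) : Prop :=
  m O = O /\
  forall n, exists q, is_pn d omega (m n) q /\ m (S n) = (m n + q + 1)%nat.

Definition smooth (f : R -> R) : Prop :=
  exists D : nat -> R -> R, D O = f /\
    forall k x, derivable_pt_lim (D k) x (D (S k) x).
Definition cutoff (chi : R -> R) : Prop :=
  smooth chi /\
  (forall x, chi (- x) = chi x) /\
  (forall x y, Rabs x <= Rabs y -> chi y <= chi x) /\
  (forall x, Rabs x <= 1 / 2 -> chi x = 1) /\
  (forall x, 1 <= Rabs x -> chi x = 0).
Definition chi_n (chi : R -> R) d omega (m : nat -> nat) (n : nat) (x : R) : R :=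
  chi (4 * x / alpha d omega (m n)).
(* Psi_n = chi_{n-1} psi_n, psi_n = 1 - chi_n, chi_{-1} = 1 *)
Definition Psi (chi : R -> R) d omega (m : nat -> nat) (n : nat) (x : R) : R :=
  (match n with O => 1 | S k => chi_n chi d omega m k x end) *
  (1 - chi_n chi d omega m n x).

(* Nodes are 0..N-1; par v = Some w: the line l_v leaving v enters w;
   par v = None: l_v is the root line (enters the root). *)
Definition step (par : nat -> option nat) (o : option nat) : option nat :=
  match o with None => None | Some x => par x end.
Fixpoint iter_par (par : nat -> option nat) (k : nat) (o : option nat) : option nat :=
  match k with O => o | S k' => iter_par par k' (step par o) end.

Record is_tree (N : nat) (par : nat -> option nat) : Prop := {
  par_range : forall v w, (v < N)%nat -> par v = Some w -> (w < N)%nat;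
  root_unique : exists r, (r < N)%nat /\ par r = None /\
                  forall v, (v < N)%nat -> par v = None -> v = r;
  acyclic : forall v, (v < N)%nat -> exists k, iter_par par k (Some v) = None }.

Definition optnat_eqb (o : option nat) (v : nat) : bool :=
  match o with Some x => Nat.eqb x v | None => false end.
(* w ⪯ v : v lies on the path from w to the root (paths in a tree with
   N nodes have length < N) *)
Definition preceq (N : nat) (par : nat -> option nat) (w v : nat) : bool :=
  existsb (fun k => optnat_eqb (iter_par par k (Some w)) v) (seq 0 (S N)).
Definition momentum (N : nat) (par : nat -> option nat) (nu : nat -> vec) (v : nat) : vec :=
  fun i => Zsum (filter (fun w => preceq N par w v) (seq 0 N)) (fun w => nu w i).

(* labelled tree: modes nu, scales (scale v = n_{l_v}, -1 encoded as -1) *)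
Definition labelled_tree (d N : nat) (par : nat -> option nat) (nu : nat -> vec)
    (scale : nat -> Z) : Prop :=
  is_tree N par /\
  (forall v, (v < N)%nat -> par v <> None -> vnonzero d (momentum N par nu v)) /\
  (forall v, (v < N)%nat ->
     (vzero d (momentum N par nu v) -> scale v = (-1)%Z) /\
     (vnonzero d (momentum N par nu v) -> (0 <= scale v)%Z)).

(* A subgraph is a set T of nodes with the lines of theta joining them. *)
Definition in_nodes (N : nat) (T : nat -> bool) : Prop :=
  forall v, T v = true -> (v < N)%nat.
Definition internalb (par : nat -> option nat) (T : nat -> bool) (v : nat) : bool :=
  T v && match par v with Some w => T w | None => false end.

Inductive conn (par : nat -> option nat) (T : nat -> bool) : nat -> nat -> Prop :=
  | conn_refl v : T v = true -> conn par T v v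
  | conn_up u v w : conn par T u v -> internalb par T v = true -> par v = Some w ->
      conn par T u w
  | conn_down u v w : conn par T u w -> internalb par T v = true -> par v = Some w ->
      conn par T u v.
Definition connected (par : nat -> option nat) (T : nat -> bool) : Prop :=
  forall u v, T u = true -> T v = true -> conn par T u v.
Definition lines_le (par : nat -> option nat) (scale : nat -> Z) (T : nat -> bool) (n : Z) : Prop :=
  forall v, internalb par T v = true -> (scale v <= n)%Z.

Definition cluster (N : nat) (par : nat -> option nat) (scale : nat -> Z)
    (T : nat -> bool) (n : Z) : Prop :=
  in_nodes N T /\ connected par T /\ lines_le par scale T n /\
  (exists v, internalb par T v = true /\ scale v = n) /\
  (forall T', in_nodes N T' -> (forall v, T v = true -> T' v = true) ->
     connected par T' -> lines_le par scale T' n ->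
     forall v, T' v = true -> T v = true).

Definition entering (N : nat) (par : nat -> option nat) (T : nat -> bool) (w : nat) : Prop :=
  (w < N)%nat /\ T w = false /\ exists v, par w = Some v /\ T v = true.
Definition exiting (N : nat) (par : nat -> option nat) (T : nat -> bool) (v : nat) : Prop :=
  (v < N)%nat /\ T v = true /\ (par v = None \/ exists w, par v = Some w /\ T w = false).

Definition se_cluster_on_scale (d N : nat) (par : nat -> option nat) (nu : nat -> vec)
    (scale : nat -> Z) (T : nat -> bool) (n : Z) : Prop :=
  cluster N par scale T n /\
  exists l', entering N par T l' /\ (forall x, entering N par T x -> x = l') /\
  exists l, exiting N par T l /\ (forall x, exiting N par T x -> x = l) /\
  veq d (momentum N par nu l) (momentum N par nu l').

(* scale -1 self-energy cluster: a single node v with nu_v = 0 and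
   exactly one entering line *)
Definition se_cluster_trivial (d N : nat) (par : nat -> option nat) (nu : nat -> vec)
    (T : nat -> bool) : Prop :=
  exists v, (v < N)%nat /\ (forall x, T x = true <-> x = v) /\ vzero d (nu v) /\
  exists w, entering N par T w /\ forall x, entering N par T x -> x = w.

Definition se_cluster (d N : nat) (par : nat -> option nat) (nu : nat -> vec)
    (scale : nat -> Z) (T : nat -> bool) : Prop :=
  (exists n, se_cluster_on_scale d N par nu scale T n) \/
  se_cluster_trivial d N par nu T.

Definition renormalised (d N : nat) (par : nat -> option nat) (nu : nat -> vec)
    (scale : nat -> Z) (T : nat -> bool) : Prop :=
  forall S, se_cluster d N par nu scale S ->
    (forall v, S v = true -> T v = true) ->
    forall v, T v = true -> S v = true.

Definition Nlines_ge (N : nat) (par : nat -> option nat) (scale : nat -> Z)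
    (T : nat -> bool) (p : nat) : nat :=
  length (filter (fun v => internalb par T v && Z.leb (Z.of_nat p) (scale v)) (seq 0 N)).
Definition Kval (d N : nat) (nu : nat -> vec) (T : nat -> bool) : Z :=
  Zsum (filter T (seq 0 N)) (fun v => norm1 d (nu v)).

(* Main.v *)
Require Import Defs.
From Stdlib Require Import Reals ZArith Arith List Lia Lra Classical Bool FinFun.
Import ListNotations.
Open Scope nat_scope.

Section TreeFacts.
Variables (N : nat) (par : nat -> option nat).
Hypothesis Htree : is_tree N par.

Definition reach k w v := iter_par par k (Some w) = Some v.

Lemma iter_None k : iter_par par k None = None.
Proof. induction k; simpl; auto. Qed.

Lemma iter_add a b o : iter_par par (a + b) o = iter_par par b (iter_par par a o).
Proof. revert o; induction a; intro o; simpl; auto. Qed.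

Lemma iter_Sr k o : iter_par par (S k) o = step par (iter_par par k o).
Proof. replace (S k) with (k + 1) by lia. rewrite iter_add. reflexivity. Qed.

Lemma reach0 w v : reach 0 w v -> v = w.
Proof. unfold reach; simpl; intro H; inversion H; auto. Qed.

Lemma reachS k w v : reach (S k) w v <-> exists y, par w = Some y /\ reach k y v.
Proof.
  unfold reach; simpl. split.
  - destruct (par w) eqn:E. + intro H; exists n; auto. + rewrite iter_None; discriminate.
  - intros [y [H1 H2]]; rewrite H1; auto.
Qed.

Lemma reach_trans a b w x v : reach a w x -> reach b x v -> reach (a + b) w v.
Proof. unfold reach; intros H1 H2; rewrite iter_add, H1; auto. Qed.

Lemma reach_split a b w x v : reach a w x -> reach b w v -> a <= b -> reach (b - a) x v.
Proof.
  unfold reach; intros H1 H2 Hle. replace b with (a + (b - a)) in H2 by lia.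
  rewrite iter_add, H1 in H2; auto.
Qed.

Lemma reach_range k w v : (w < N)%nat -> reach k w v -> (v < N)%nat.
Proof.
  revert w; induction k; intros w Hw H.
  - apply reach0 in H; subst; auto.
  - apply reachS in H; destruct H as [y [H1 H2]].
    apply (IHk y); auto. eapply (par_range _ _ Htree); eauto.
Qed.

Lemma reach_pow k c v : reach k v v -> reach (k * c) v v.
Proof.
  intro H; induction c.
  - rewrite Nat.mul_0_r; reflexivity.
  - replace (k * S c) with (k * c + k) by lia. eapply reach_trans; eauto.
Qed.

Lemma reach_cycle k v : (v < N)%nat -> reach (S k) v v -> False.
Proof.
  intros Hv H. destruct (acyclic _ _ Htree v Hv) as [K HK].
  pose proof (reach_pow _ K _ H) as H2. unfold reach in H2.
  replace (S k * K) with (K + k * K) in H2 by lia.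
  rewrite iter_add, HK, iter_None in H2. discriminate.
Qed.

Lemma reach_unique a b w v : (w < N)%nat -> reach a w v -> reach b w v -> a = b.
Proof.
  intros Hw Ha Hb.
  assert (Hv : (v < N)%nat) by (eapply reach_range; eauto).
  destruct (Nat.lt_total a b) as [Hl|[He|Hl]]; auto; exfalso.
  - pose proof (reach_split _ _ _ _ _ Ha Hb (Nat.lt_le_incl _ _ Hl)).
    destruct (b - a) eqn:E; [lia|]. eapply reach_cycle; eauto.
  - pose proof (reach_split _ _ _ _ _ Hb Ha (Nat.lt_le_incl _ _ Hl)).
    destruct (a - b) eqn:E; [lia|]. eapply reach_cycle; eauto.
Qed.

Lemma reach_fun k w x y : reach k w x -> reach k w y -> x = y.
Proof. unfold reach; intros H1 H2; rewrite H1 in H2; inversion H2; auto. Qed.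

Lemma reach_prefix k i w v : reach k w v -> (i <= k)%nat -> exists y, reach i w y.
Proof.
  unfold reach; intros H Hi. destruct (iter_par par i (Some w)) eqn:E; eauto.
  replace k with (i + (k - i)) in H by lia. rewrite iter_add, E, iter_None in H; discriminate.
Qed.

Definition node_at w i := match iter_par par i (Some w) with Some x => x | None => N end.

Lemma reach_bound k w v : (w < N)%nat -> reach k w v -> exists k', (k' <= N)%nat /\ reach k' w v.
Proof.
  revert w v. induction k as [k IH] using lt_wf_ind. intros w v Hw H.
  destruct (le_lt_dec k N) as [Hle|Hlt]; [eauto|].
  destruct (classic (NoDup (map (node_at w) (seq 0 (S N))))) as [HN|HN].
  - exfalso. assert (incl (map (node_at w) (seq 0 (S N))) (seq 0 N)) as Hi.
    { intros x Hx. apply in_map_iff in Hx. destruct Hx as [i [Hi1 Hi2]].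
      apply in_seq in Hi2. destruct (reach_prefix k i w v H) as [y Hy]; [lia|].
      unfold node_at in Hi1; unfold reach in Hy; rewrite Hy in Hi1; subst.
      apply in_seq. split; [lia|]. simpl. eapply reach_range; eauto. }
    apply NoDup_incl_length in Hi; auto. rewrite length_map, !length_seq in Hi; lia.
  - assert (~ (forall x y, In x (seq 0 (S N)) -> In y (seq 0 (S N)) ->
               node_at w x = node_at w y -> x = y)) as HH.
    { intro Hc. apply HN. apply Injective_map_NoDup_in; auto. apply seq_NoDup. }
    apply not_all_ex_not in HH; destruct HH as [i HH].
    apply not_all_ex_not in HH; destruct HH as [j HH].
    apply imply_to_and in HH; destruct HH as [Hi HH].
    apply imply_to_and in HH; destruct HH as [Hj HH].
    apply imply_to_and in HH; destruct HH as [Heq Hne].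
    apply in_seq in Hi; apply in_seq in Hj.
    destruct (reach_prefix k i w v H) as [yi Hyi]; [lia|].
    destruct (reach_prefix k j w v H) as [yj Hyj]; [lia|].
    unfold node_at in Heq; unfold reach in Hyi, Hyj; rewrite Hyi, Hyj in Heq; subst yj.
    assert (forall i j, i < j <= N -> reach i w yi -> reach j w yi ->
              exists k', (k' <= N)%nat /\ reach k' w v) as Key.
    { clear i j Hi Hj Hne Hyi Hyj. intros i j Hij Hi Hj.
      pose proof (reach_split _ _ _ _ _ Hj H ltac:(lia)) as H2.
      pose proof (reach_trans _ _ _ _ _ Hi H2) as H3.
      apply (IH (i + (k - j))); [lia|exact Hw|exact H3]. }
    destruct (Nat.lt_total i j) as [Hl|[He|Hl]]; [apply (Key i j); [lia|exact Hyi|exact Hyj]|congruence|].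
    apply (Key j i); [lia|exact Hyj|exact Hyi].
Qed.

Lemma preceq_iff w v : (w < N)%nat -> (preceq N par w v = true <-> exists k, reach k w v).
Proof.
  intro Hw. unfold preceq. rewrite existsb_exists. split.
  - intros [k [_ Hk]]. exists k. unfold reach, optnat_eqb in *.
    destruct (iter_par par k (Some w)); [apply Nat.eqb_eq in Hk; subst; auto| discriminate].
  - intros [k Hk]. destruct (reach_bound k w v Hw Hk) as [k' [Hk'1 Hk'2]].
    exists k'. split; [apply in_seq; lia|]. unfold reach in Hk'2; rewrite Hk'2; simpl; apply Nat.eqb_refl.
Qed.

End TreeFacts.

Lemma reach_Sr (par0 : nat -> option nat) k w z :
  reach par0 (S k) w z -> exists y, reach par0 k w y /\ par0 y = Some z.
Proof.
  unfold reach. rewrite iter_Sr. destruct (iter_par par0 k (Some w)) as [y|]; simpl; [eauto|discriminate].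
Qed.

Lemma Zsum_cons (x : nat) (l : list nat) (f : nat -> Z) : Zsum (x :: l) f = (f x + Zsum l f)%Z.
Proof. reflexivity. Qed.

Lemma Zsum_filter_or (l : list nat) (P Q : nat -> bool) (f : nat -> Z) :
  (forall w, In w l -> P w = true -> Q w = true -> False) ->
  Zsum (filter (fun w => P w || Q w) l) f = (Zsum (filter P l) f + Zsum (filter Q l) f)%Z.
Proof.
  induction l as [|x l IH]; intro H; simpl; auto.
  destruct (P x) eqn:Px, (Q x) eqn:Qx; simpl; rewrite IH by (intros; eapply H; eauto; right; auto).
  - exfalso; eapply H; eauto; left; auto.
  - unfold Zsum; simpl; lia.
  - unfold Zsum; simpl; lia.
  - lia.
Qed.

Lemma filter_len0 (l : list nat) (f : nat -> bool) : length (filter f l) = 0 -> forall x, In x l -> f x = false.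
Proof.
  intros H x Hx. destruct (f x) eqn:E; auto. assert (In x (filter f l)) by (apply filter_In; auto).
  destruct (filter f l); simpl in *; [contradiction|lia].
Qed.

Lemma filter_len1 (l : list nat) (f : nat -> bool) : length (filter f l) = 1 ->
  exists x0, In x0 l /\ f x0 = true /\ forall x, In x l -> f x = true -> x = x0.
Proof.
  intro H. destruct (filter f l) as [|x0 [|x1 r]] eqn:E; simpl in H; try lia.
  exists x0. assert (In x0 (filter f l)) as Hin by (rewrite E; left; auto).
  apply filter_In in Hin. destruct Hin as [Hin1 Hin2]. split; auto; split; auto.
  intros x Hx Hfx. assert (In x (filter f l)) as Hin by (apply filter_In; auto).
  rewrite E in Hin; destruct Hin as [Hin|[]]; auto.
Qed.

Lemma argmax_scale (l : list nat) (f : nat -> bool) (sc : nat -> Z) :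
  (exists v, In v l /\ f v = true) ->
  exists v0, In v0 l /\ f v0 = true /\ forall v, In v l -> f v = true -> (sc v <= sc v0)%Z.
Proof.
  induction l as [|x l IH]; intros [v [Hv Hf]]; [destruct Hv|].
  destruct (classic (exists v, In v l /\ f v = true)) as [He|Hn].
  - destruct (IH He) as [v0 [H1 [H2 H3]]].
    destruct (f x) eqn:Fx.
    + destruct (Z_le_gt_dec (sc x) (sc v0)) as [Hle|Hgt].
      * exists v0; split; [right; auto|split; auto]. intros u [<-|Hu] Fu; auto.
      * exists x; split; [left; auto|split; auto]. intros u [<-|Hu] Fu; [lia|]. specialize (H3 u Hu Fu); lia.
    + exists v0; split; [right; auto|split; auto]. intros u [<-|Hu] Fu; [congruence|auto].
  - destruct Hv as [<-|Hv]; [|exfalso; apply Hn; eauto].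
    exists x; split; [left; auto|split; auto]. intros u [<-|Hu] Fu; [lia|exfalso; apply Hn; eauto].
Qed.

Lemma Zsum_filter_none (l : list nat) (f : nat -> Z) (P : nat -> bool) :
  (forall z, In z l -> P z = false) -> Zsum (filter P l) f = 0%Z.
Proof.
  induction l as [|x l IH]; intro H; simpl; auto. rewrite H by (left; auto). apply IH; intros; apply H; right; auto.
Qed.

Lemma Zsum_single (l : list nat) (t : nat) (f : nat -> Z) (P : nat -> bool) :
  In t l -> NoDup l -> (forall z, In z l -> P z = true <-> z = t) -> Zsum (filter P l) f = f t.
Proof.
  induction l as [|x l IH]; intros Hin Hnd HP; [destruct Hin|].
  inversion Hnd; subst. simpl. destruct Hin as [<-|Hin].
  - assert (P x = true) as E by (apply HP; [left|]; auto). rewrite E. simpl.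
    rewrite Zsum_filter_none; [lia|]. intros z Hz. destruct (P z) eqn:Pz; auto.
    apply HP in Pz; [subst; contradiction|right; auto].
  - assert (P x = false) as E.
    { destruct (P x) eqn:Px; auto. apply HP in Px; [subst; contradiction|left; auto]. }
    rewrite E. apply IH; auto. intros z Hz; apply HP; right; auto.
Qed.

Lemma Zsum_add (l : list nat) (f g : nat -> Z) : Zsum l (fun x => f x + g x)%Z = (Zsum l f + Zsum l g)%Z.
Proof. induction l; simpl; auto; unfold Zsum in *; simpl; lia. Qed.

Lemma Zsum_le (l : list nat) (f g : nat -> Z) : (forall x, In x l -> (f x <= g x)%Z) -> (Zsum l f <= Zsum l g)%Z.
Proof.
  induction l as [|x l IH]; intro H; simpl; [lia|].
  specialize (H x (or_introl eq_refl)) as H1. assert (Zsum l f <= Zsum l g)%Z by (apply IH; intros; apply H; right; auto).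
  unfold Zsum in *; simpl; lia.
Qed.

Lemma Zsum_ext (l : list nat) (f g : nat -> Z) : (forall x, In x l -> f x = g x) -> Zsum l f = Zsum l g.
Proof. intro H; induction l as [|x l IH]; simpl; auto. rewrite H by (left; auto). f_equal. apply IH; intros; apply H; right; auto. Qed.

Lemma norm1_ext d (mu mu' : vec) : (forall i, i < d -> mu i = mu' i) -> norm1 d mu = norm1 d mu'.
Proof. intro H. unfold norm1. apply Zsum_ext. intros i Hi. apply in_seq in Hi. rewrite H; auto; lia. Qed.

Lemma norm1_sum d (l : list nat) (g : nat -> vec) :
  (norm1 d (fun i => Zsum l (fun w => g w i)) <= Zsum l (fun w => norm1 d (g w)))%Z.
Proof.
  induction l as [|x l IH]; simpl.
  - unfold norm1. rewrite (Zsum_ext _ _ (fun _ => 0%Z)); [|intros; reflexivity].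
    clear. induction (seq 0 d); simpl; auto; lia.
  - unfold norm1 at 1. eapply Z.le_trans.
    { apply (Zsum_le _ _ (fun i => Z.abs (g x i) + Z.abs (Zsum l (fun w => g w i)))%Z).
      intros i _. apply Z.abs_triangle. }
    rewrite Zsum_add. fold (norm1 d (g x)). fold (norm1 d (fun i => Zsum l (fun w => g w i))). lia.
Qed.

Lemma norm1_nonneg d mu : (0 <= norm1 d mu)%Z.
Proof. unfold norm1. induction (seq 0 d); simpl; [lia|]. pose proof (Z.abs_nonneg (mu a)). lia. Qed.

Lemma Zsum_filter_cons (x : nat) (l : list nat) (f : nat -> bool) (h : nat -> Z) :
  Zsum (filter f (x :: l)) h = ((if f x then h x else 0) + Zsum (filter f l) h)%Z.
Proof. simpl. destruct (f x); simpl; auto. Qed.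

Lemma Zsum_zero (l : list nat) : Zsum l (fun _ => 0%Z) = 0%Z.
Proof. induction l; simpl; auto. Qed.

Lemma Zsum_indic (ts : list nat) (y : nat) (c : Z) : NoDup ts -> In y ts ->
  Zsum ts (fun t => if Nat.eqb y t then c else 0%Z) = c.
Proof.
  induction ts as [|x ts IH]; intros Hnd Hin; [destruct Hin|]. inversion Hnd; subst. simpl.
  destruct Hin as [->|Hin].
  - rewrite Nat.eqb_refl. rewrite (Zsum_ext _ _ (fun _ => 0%Z)), Zsum_zero; [lia|].
    intros z Hz. destruct (Nat.eqb y z) eqn:E; auto. apply Nat.eqb_eq in E; subst; contradiction.
  - destruct (Nat.eqb y x) eqn:E; [apply Nat.eqb_eq in E; subst; contradiction|]. rewrite IH; auto.
Qed.

Lemma fiber (ts l : list nat) (P : nat -> bool) (g : nat -> nat) (h : nat -> Z) :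
  NoDup ts -> (forall x, In x l -> P x = true -> In (g x) ts) ->
  Zsum ts (fun t => Zsum (filter (fun x => P x && Nat.eqb (g x) t) l) h) = Zsum (filter P l) h.
Proof.
  intros Hnd. induction l as [|x l IH]; intro H.
  - simpl. apply Zsum_zero.
  - rewrite (Zsum_ext _ _ (fun t => (if P x && Nat.eqb (g x) t then h x else 0) +
       Zsum (filter (fun x => P x && Nat.eqb (g x) t) l) h)%Z) by (intros; apply Zsum_filter_cons).
    rewrite Zsum_add, IH by (intros; apply H; auto; right; auto).
    rewrite Zsum_filter_cons. f_equal. destruct (P x) eqn:Px.
    + apply Zsum_indic; auto. apply H; auto; left; auto.
    + simpl. apply Zsum_zero.
Qed.

Lemma len_Zsum (l : list nat) : Z.of_nat (length l) = Zsum l (fun _ => 1%Z).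
Proof. induction l; [reflexivity|]. cbn [length]. rewrite Nat2Z.inj_succ, IHl, Zsum_cons. lia. Qed.

Lemma Zsum_const (l : list nat) (c : Z) : Zsum l (fun _ => c) = (c * Z.of_nat (length l))%Z.
Proof. induction l; [simpl; lia|]. cbn [length]. rewrite Nat2Z.inj_succ, Zsum_cons, IHl. lia. Qed.

Lemma Zsum_scale (l : list nat) (c : Z) (f : nat -> Z) : Zsum l (fun x => c * f x)%Z = (c * Zsum l f)%Z.
Proof. induction l; [simpl; lia|]. rewrite !Zsum_cons, IHl. lia. Qed.

Lemma Zsum_nonneg (l : list nat) (f : nat -> Z) : (forall x, (0 <= f x)%Z) -> (0 <= Zsum l f)%Z.
Proof. intro H; induction l; [simpl; lia|]. rewrite Zsum_cons. specialize (H a). lia. Qed.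

Section Comb.
Variables (d N : nat) (par : nat -> option nat) (nu : nat -> vec) (scale : nat -> Z)
  (T : nat -> bool) (n p b w' a : nat).
Hypothesis Htree : is_tree N par.
Hypothesis Hlab : labelled_tree d N par nu scale.
Hypothesis Hcl : cluster N par scale T (Z.of_nat n).
Hypothesis Hent : entering N par T w'.
Hypothesis Hentu : forall x, entering N par T x -> x = w'.
Hypothesis Hexi : exiting N par T b.
Hypothesis Hexu : forall x, exiting N par T x -> x = b.
Hypothesis Hveq : veq d (momentum N par nu b) (momentum N par nu w').
Hypothesis Hren : renormalised d N par nu scale T.
Hypothesis Hpn : p <= n.
Hypothesis Ha : par w' = Some a.

Notation reach := (reach par).

Lemma Tin v : T v = true -> v < N.
Proof. destruct Hcl as [H _]; apply H. Qed.

Lemma Ta : T a = true.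
Proof. destruct Hent as [_ [_ [v [H1 H2]]]]. rewrite Ha in H1; inversion H1; subst; auto. Qed.

Lemma Tw' : T w' = false.
Proof. destruct Hent as [_ [H _]]; auto. Qed.

Lemma w'N : w' < N.
Proof. destruct Hent as [H _]; auto. Qed.

Lemma Tb : T b = true.
Proof. destruct Hexi as [_ [H _]]; auto. Qed.

Lemma T_par w : T w = true -> w <> b -> exists y, par w = Some y /\ T y = true.
Proof.
  intros Hw Hne. destruct (par w) as [y|] eqn:E.
  - destruct (T y) eqn:Ey; eauto. exfalso; apply Hne, Hexu. split; [apply Tin; auto|split; auto].
    right; eauto.
  - exfalso; apply Hne, Hexu. split; [apply Tin; auto|split; auto].
Qed.

Lemma T_reach_b w : T w = true -> exists k, reach k w b.
Proof.
  intro Hw. destruct (acyclic _ _ Htree w (Tin w Hw)) as [K HK].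
  revert w Hw HK. induction K; intros w Hw HK.
  - simpl in HK; discriminate.
  - destruct (Nat.eq_dec w b) as [->|Hne]; [exists 0; reflexivity|].
    destruct (T_par w Hw Hne) as [y [Hy1 Hy2]].
    simpl in HK. rewrite Hy1 in HK. destruct (IHK y Hy2 HK) as [k Hk].
    exists (S k). apply reachS. eauto.
Qed.

Definition isL v := internalb par T v && Z.leb (Z.of_nat p) (scale v).
Definition isTop v := isL v || Nat.eqb v b.

Lemma isL_b : isL b = false.
Proof.
  unfold isL, internalb. destruct Hexi as [_ [H1 [H2|[w [H2 H3]]]]]; rewrite H1, H2; auto.
  rewrite H3; auto.
Qed.

Lemma isTop_T v : isTop v = true -> T v = true.
Proof.
  unfold isTop, isL, internalb. intro H. apply orb_true_iff in H; destruct H as [H|H].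
  - apply andb_true_iff in H; destruct H as [H _]; apply andb_true_iff in H; tauto.
  - apply Nat.eqb_eq in H; subst; apply Tb.
Qed.

Fixpoint topf_fuel (f : nat) (w : nat) : nat :=
  if isTop w then w else
  match f with O => w | S f' => match par w with Some y => topf_fuel f' y | None => w end end.
Definition topf w := topf_fuel N w.

Definition FT x t j := reach j x t /\ isTop t = true /\
  forall i z, i < j -> reach i x z -> isTop z = false.

Lemma topf_fuel_spec k : forall f w, k <= f -> T w = true -> reach k w b ->
  exists j, FT w (topf_fuel f w) j /\ (forall i z, i <= j -> reach i w z -> T z = true).
Proof.
  induction k; intros f w Hk Hw Hr.
  - apply reach0 in Hr; subst. exists 0. destruct f; simpl;
    (assert (isTop b = true) as E by (unfold isTop; rewrite Nat.eqb_refl, orb_true_r; auto));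
    rewrite E; (split; [split; [reflexivity|split; auto; intros; lia]|]);
    intros i z Hi Hz; (replace i with 0 in Hz by lia); apply reach0 in Hz; subst; apply Tb.
  - destruct (isTop w) eqn:Et.
    + exists 0. destruct f; simpl; rewrite Et; (split; [split; [reflexivity|split; auto; intros; lia]|]);
      intros i z Hi Hz; (replace i with 0 in Hz by lia); apply reach0 in Hz; subst; auto.
    + apply reachS in Hr. destruct Hr as [y [Hy Hr]].
      destruct f; [lia|]. simpl. rewrite Et, Hy.
      assert (T y = true) as HTy.
      { assert (w <> b) as Hne by (intro; subst; unfold isTop in Et; rewrite Nat.eqb_refl, orb_true_r in Et; discriminate).
        destruct (T_par w Hw Hne) as [y' [H1 H2]]. congruence. }
      destruct (IHk f y ltac:(lia) HTy Hr) as [j [[H1 [H2 H3]] H4]].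
      exists (S j). split; [split; [apply reachS; eauto|split; auto]|].
      * intros i z Hi Hz. destruct i; [apply reach0 in Hz; subst; auto|].
        apply reachS in Hz; destruct Hz as [y' [Hy' Hz]]. rewrite Hy in Hy'; inversion Hy'; subst.
        apply (H3 i); auto; lia.
      * intros i z Hi Hz. destruct i; [apply reach0 in Hz; subst; auto|].
        apply reachS in Hz; destruct Hz as [y' [Hy' Hz]]. rewrite Hy in Hy'; inversion Hy'; subst.
        apply (H4 i); auto; lia.
Qed.

Lemma topf_spec w : T w = true ->
  exists j, FT w (topf w) j /\ (forall i z, i <= j -> reach i w z -> T z = true).
Proof.
  intro Hw. destruct (T_reach_b w Hw) as [k Hk].
  destruct (reach_bound N par Htree k w b (Tin w Hw) Hk) as [k' [Hk'1 Hk'2]].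
  eapply topf_fuel_spec; eauto.
Qed.

Lemma FT_unique w t1 t2 j1 j2 : FT w t1 j1 -> FT w t2 j2 -> t1 = t2.
Proof.
  intros [A1 [B1 C1]] [A2 [B2 C2]].
  destruct (Nat.lt_total j1 j2) as [Hl|[He|Hl]].
  - rewrite (C2 j1 t1 Hl A1) in B1; discriminate.
  - subst; eapply reach_fun; eauto.
  - rewrite (C1 j2 t2 Hl A2) in B2; discriminate.
Qed.

Lemma topf_top w : isTop w = true -> topf w = w.
Proof. intro H. unfold topf. destruct N; simpl; rewrite H; auto. Qed.

Lemma topf_isTop w : T w = true -> isTop (topf w) = true /\ T (topf w) = true.
Proof. intro Hw. destruct (topf_spec w Hw) as [j [[H1 [H2 H3]] H4]]. split; auto. apply (H4 j); auto. Qed.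

Lemma topf_walk i : forall w z, T w = true -> reach i w z ->
  (forall i' z', i' < i -> reach i' w z' -> isTop z' = false) ->
  T z = true /\ topf z = topf w.
Proof.
  induction i; intros w z Hw Hr Hn.
  - apply reach0 in Hr; subst; auto.
  - apply reachS in Hr; destruct Hr as [y [Hy Hr]].
    assert (isTop w = false) as Ew by (apply (Hn 0); [lia|reflexivity]).
    assert (w <> b) as Hne by (intro; subst; unfold isTop in Ew; rewrite Nat.eqb_refl, orb_true_r in Ew; discriminate).
    destruct (T_par w Hw Hne) as [y' [H1 H2]]. rewrite Hy in H1; inversion H1; subst y'.
    destruct (topf_spec w Hw) as [j [[A1 [B1 C1]] D1]].
    assert (topf y = topf w) as Eq.
    { destruct j as [|j]. { apply reach0 in A1. rewrite <- A1 in B1. congruence. }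
      apply reachS in A1; destruct A1 as [y' [Hy' A1]]. rewrite Hy in Hy'; inversion Hy'; subst y'.
      destruct (topf_spec y H2) as [j' [F' _]].
      eapply FT_unique; [exact F'|]. split; [exact A1|split; auto].
      intros i0 z0 Hi0 Hz0. apply (C1 (S i0)); [lia|]. apply reachS; eauto. }
    destruct (IHi y z H2 Hr) as [IH1 IH2].
    { intros i' z' Hi' Hz'. apply (Hn (S i')); [lia|]. apply reachS; eauto. }
    split; auto. congruence.
Qed.

Lemma topf_par w y : T w = true -> isTop w = false -> par w = Some y ->
  T y = true /\ topf y = topf w.
Proof.
  intros Hw Ht Hy. apply (topf_walk 1 w y Hw).
  - apply reachS; exists y; split; auto; reflexivity.
  - intros i' z' Hi' Hz'. replace i' with 0 in Hz' by lia. apply reach0 in Hz'; subst; auto.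
Qed.

Lemma internal_mono (T1 T2 : nat -> bool) v : (forall z, T1 z = true -> T2 z = true) ->
  internalb par T1 v = true -> internalb par T2 v = true.
Proof.
  unfold internalb; intros H H1. apply andb_true_iff in H1; destruct H1 as [H1 H2].
  rewrite (H v H1). destruct (par v); auto. simpl. apply H; auto.
Qed.

Lemma conn_mono (T1 T2 : nat -> bool) u v : (forall z, T1 z = true -> T2 z = true) ->
  conn par T1 u v -> conn par T2 u v.
Proof.
  intros H Hc; induction Hc.
  - apply conn_refl; auto.
  - eapply conn_up; eauto. eapply internal_mono; eauto.
  - eapply conn_down; eauto. eapply internal_mono; eauto.
Qed.

Lemma conn_trans (T1 : nat -> bool) x0 y0 z0 : conn par T1 x0 y0 -> conn par T1 y0 z0 -> conn par T1 x0 z0.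
Proof.
  intros H1 H2; revert H1; induction H2; intro H1; auto.
  - eapply conn_up; [apply IHconn; exact H1|eauto|eauto].
  - eapply conn_down; [apply IHconn; exact H1|eauto|eauto].
Qed.

Lemma internal_T (T1 : nat -> bool) v w : internalb par T1 v = true -> par v = Some w ->
  T1 v = true /\ T1 w = true.
Proof. unfold internalb; intros H E; rewrite E in H; apply andb_true_iff in H; auto. Qed.

Lemma conn_sym (T1 : nat -> bool) u v : conn par T1 u v -> conn par T1 v u.
Proof.
  intro H; induction H.
  - apply conn_refl; auto.
  - destruct (internal_T _ _ _ H0 H1) as [A1 A2].
    eapply conn_trans; [|exact IHconn]. eapply conn_down; eauto. apply conn_refl; auto.
  - destruct (internal_T _ _ _ H0 H1) as [A1 A2].
    eapply conn_trans; [|exact IHconn]. eapply conn_up; eauto. apply conn_refl; auto.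
Qed.

Lemma conn_add z y : connected par T -> T z = true -> (par z = Some y \/ par y = Some z) ->
  connected par (fun v => T v || Nat.eqb v y).
Proof.
  intros Hc Hz Hzy.
  set (T' := fun v => T v || Nat.eqb v y).
  assert (Hsub : forall v, T v = true -> T' v = true) by (intros v Hv; unfold T'; rewrite Hv; auto).
  assert (HT'y : T' y = true) by (unfold T'; rewrite Nat.eqb_refl, orb_true_r; auto).
  assert (Hzy' : conn par T' z y).
  { destruct Hzy as [E|E].
    - eapply conn_up; [apply conn_refl; auto| |exact E]. unfold internalb; rewrite E, (Hsub z Hz), HT'y; auto.
    - eapply conn_down; [apply conn_refl; auto| |exact E]. unfold internalb; rewrite E, (Hsub z Hz), HT'y; auto. }
  assert (Hto : forall v, T' v = true -> conn par T' z v).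
  { intros v Hv. unfold T' in Hv. apply orb_true_iff in Hv; destruct Hv as [Hv|Hv].
    - apply (conn_mono T); auto.
    - apply Nat.eqb_eq in Hv; subst; auto. }
  intros u v Hu Hv. eapply conn_trans; [apply conn_sym, Hto; auto|apply Hto; auto].
Qed.

Lemma no_b_w' : par b = Some w' -> False.
Proof.
  intro E. destruct (T_reach_b a Ta) as [k Hk].
  apply (reach_cycle N par Htree (S k) b (Tin b Tb)).
  apply reachS; exists w'; split; [exact E|]. apply reachS; exists a; split; [exact Ha|exact Hk].
Qed.

Lemma scale_w'_gt : (Z.of_nat n < scale w')%Z.
Proof.
  destruct (Z_lt_le_dec (Z.of_nat n) (scale w')) as [H|H]; auto. exfalso.
  destruct Hcl as [Hin [Hco [Hle [_ Hmax]]]].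
  set (T' := fun v => T v || Nat.eqb v w').
  assert (T' w' = true -> T w' = true) as K.
  { apply (Hmax T').
    - intros v Hv. unfold T' in Hv. apply orb_true_iff in Hv; destruct Hv as [Hv|Hv]; [apply Hin; auto|].
      apply Nat.eqb_eq in Hv; subst; apply w'N.
    - intros v Hv; unfold T'; rewrite Hv; auto.
    - apply (conn_add a); auto. apply Ta.
    - intros v Hv. destruct (par v) as [z|] eqn:E; [|unfold internalb in Hv; rewrite E, andb_false_r in Hv; discriminate].
      destruct (internal_T _ _ _ Hv E) as [A1 A2]. unfold T' in A1, A2.
      destruct (Nat.eq_dec v w') as [->|Hne]; auto.
      assert (T v = true) as Tv by (apply orb_true_iff in A1; destruct A1 as [A1|A1]; auto; apply Nat.eqb_eq in A1; congruence).
      destruct (T z) eqn:Tz.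
      + apply Hle. unfold internalb; rewrite Tv, E, Tz; auto.
      + rewrite orb_false_l in A2. apply Nat.eqb_eq in A2; subst z.
        assert (v = b) by (apply Hexu; split; [apply Hin; auto|split; auto; right; eauto]).
        subst; exfalso; apply no_b_w'; auto.
    }
  rewrite Tw' in K. unfold T' in K; rewrite Nat.eqb_refl, orb_true_r in K. specialize (K eq_refl); discriminate.
Qed.

Lemma scale_b_gt y : par b = Some y -> (Z.of_nat n < scale b)%Z.
Proof.
  intro Eb.
  assert (T y = false) as Ty.
  { destruct Hexi as [_ [_ [H|[w [H1 H2]]]]]; congruence. }
  destruct (Z_lt_le_dec (Z.of_nat n) (scale b)) as [H|H]; auto. exfalso.
  destruct Hcl as [Hin [Hco [Hle [_ Hmax]]]].
  set (T' := fun v => T v || Nat.eqb v y).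
  assert (y < N) as Hy by (eapply (par_range _ _ Htree); [apply Hin, Tb|eauto]).
  assert (T' y = true -> T y = true) as K.
  { apply (Hmax T').
    - intros v Hv. unfold T' in Hv. apply orb_true_iff in Hv; destruct Hv as [Hv|Hv]; [apply Hin; auto|].
      apply Nat.eqb_eq in Hv; subst; auto.
    - intros v Hv; unfold T'; rewrite Hv; auto.
    - apply (conn_add b); auto. apply Tb.
    - intros v Hv. destruct (par v) as [z|] eqn:E; [|unfold internalb in Hv; rewrite E, andb_false_r in Hv; discriminate].
      destruct (internal_T _ _ _ Hv E) as [A1 A2]. unfold T' in A1, A2.
      destruct (Nat.eq_dec v y) as [->|Hne].
      + exfalso. destruct (Nat.eq_dec z y) as [->|Hzy].
        * apply (reach_cycle N par Htree 0 y Hy). apply reachS; exists y; split; auto; reflexivity.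
        * assert (T z = true) as Tz by (apply orb_true_iff in A2; destruct A2 as [A2|A2]; auto; apply Nat.eqb_eq in A2; congruence).
          assert (y = w') by (apply Hentu; split; auto; split; auto; eauto). subst. apply no_b_w'; auto.
      + assert (T v = true) as Tv by (apply orb_true_iff in A1; destruct A1 as [A1|A1]; auto; apply Nat.eqb_eq in A1; congruence).
        destruct (T z) eqn:Tz.
        * apply Hle. unfold internalb; rewrite Tv, E, Tz; auto.
        * assert (v = b) by (apply Hexu; split; [apply Hin; auto|split; auto; right; eauto]). subst; auto.
    }
  rewrite Ty in K. unfold T' in K; rewrite Nat.eqb_refl, orb_true_r in K. specialize (K eq_refl); discriminate.
Qed.

Definition C t w := T w && Nat.eqb (topf w) t.
Definition parx x := match par x with Some y => y | None => x end.
Definition Lin t x := isL x && Nat.eqb (topf (parx x)) t.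
Definition indeg t : Z :=
  (Z.of_nat (length (filter (Lin t) (seq 0 N))) + (if Nat.eqb (topf a) t then 1 else 0))%Z.

Section OneTop.
Variable t : nat.
Hypothesis Ht : isTop t = true.

Lemma Tt : T t = true.
Proof. apply isTop_T; auto. Qed.

Lemma C_self : C t t = true.
Proof. unfold C. rewrite Tt, topf_top, Nat.eqb_refl; auto. Qed.

Lemma C_T w : C t w = true -> T w = true.
Proof. unfold C; intro H; apply andb_true_iff in H; tauto. Qed.

Lemma C_topf w : C t w = true -> topf w = t.
Proof. unfold C; intro H; apply andb_true_iff in H; destruct H as [_ H]; apply Nat.eqb_eq; auto. Qed.

Lemma C_intro w : T w = true -> topf w = t -> C t w = true.
Proof. unfold C; intros H1 H2; rewrite H1, H2, Nat.eqb_refl; auto. Qed.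

Lemma C_reach w : C t w = true -> exists j, reach j w t /\
  (forall i z, i <= j -> reach i w z -> C t z = true).
Proof.
  intro Hw. destruct (topf_spec w (C_T w Hw)) as [j [[A1 [B1 C1]] D1]].
  rewrite (C_topf w Hw) in A1. exists j; split; auto.
  intros i z Hi Hz. destruct (topf_walk i w z (C_T w Hw) Hz) as [E1 E2].
  - intros i' z' Hi' Hz'. apply (C1 i'); auto; lia.
  - apply C_intro; auto. rewrite E2; apply C_topf; auto.
Qed.

Lemma C_nontop w : C t w = true -> w <> t -> isTop w = false.
Proof.
  intros Hw Hne. destruct (isTop w) eqn:E; auto. exfalso. apply Hne.
  rewrite <- (topf_top w E). apply C_topf; auto.
Qed.

Lemma isTop_b : isTop b = true.
Proof. unfold isTop; rewrite Nat.eqb_refl, orb_true_r; auto. Qed.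

Lemma C_par w : C t w = true -> w <> t -> exists y, par w = Some y /\ C t y = true.
Proof.
  intros Hw Hne. pose proof (C_nontop w Hw Hne) as Hn.
  assert (w <> b) as Hb by (intro; subst; rewrite isTop_b in Hn; discriminate).
  destruct (T_par w (C_T w Hw) Hb) as [y [H1 H2]]. exists y; split; auto.
  destruct (topf_par w y (C_T w Hw) Hn H1) as [_ E]. apply C_intro; auto. rewrite E; apply C_topf; auto.
Qed.

Lemma par_t_notC y : par t = Some y -> C t y = false.
Proof.
  intro E. destruct (C t y) eqn:Cy; auto. exfalso.
  destruct (C_reach y Cy) as [j [Hj _]].
  apply (reach_cycle N par Htree j t (Tin t Tt)). apply reachS; eauto.
Qed.

Lemma ent_char x : entering N par (C t) x -> (x = w' /\ topf a = t) \/ Lin t x = true.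
Proof.
  intros [Hx [Cx [y [Ey Cy]]]].
  destruct (T x) eqn:Tx.
  - right. assert (topf x <> t) as Hne by (intro E; rewrite (C_intro x Tx E) in Cx; discriminate).
    destruct (isTop x) eqn:Etx.
    + assert (x <> b) as Hxb.
      { intro; subst. destruct Hexi as [_ [_ [H|[w [H1 H2]]]]]; [congruence|].
        rewrite Ey in H1; inversion H1; subst. rewrite (C_T w Cy) in H2; discriminate. }
      unfold Lin, parx. rewrite Ey, (C_topf y Cy), Nat.eqb_refl, andb_true_r.
      unfold isTop in Etx. apply orb_true_iff in Etx; destruct Etx as [E|E]; auto.
      apply Nat.eqb_eq in E; congruence.
    + exfalso. destruct (topf_par x y Tx Etx Ey) as [_ E]. apply Hne; rewrite <- E; apply C_topf; auto.
  - left. assert (x = w') as -> by (apply Hentu; split; auto; split; auto; exists y; split; auto; apply C_T; auto).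
    rewrite Ha in Ey; inversion Ey; subst. split; auto. apply C_topf; auto.
Qed.

Lemma ent_L x : Lin t x = true -> entering N par (C t) x.
Proof.
  unfold Lin, parx. intro H. apply andb_true_iff in H; destruct H as [HL H2].
  assert (HL' := HL). unfold isL in HL'. apply andb_true_iff in HL'; destruct HL' as [H1 _].
  destruct (par x) as [y|] eqn:E; [|unfold internalb in H1; rewrite E, andb_false_r in H1; discriminate].
  destruct (internal_T _ _ _ H1 E) as [Tx Ty]. apply Nat.eqb_eq in H2.
  assert (Cy : C t y = true) by (apply C_intro; auto).
  split; [apply Tin; auto|]. split.
  - destruct (C t x) eqn:Cx; auto. exfalso.
    assert (isTop x = true) as Htx by (unfold isTop; rewrite HL; auto).
    assert (x = t) as -> by (rewrite <- (topf_top x Htx); apply C_topf; auto).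
    rewrite (par_t_notC y E) in Cy; discriminate.
  - exists y; split; auto.
Qed.

Lemma ent_w' : topf a = t -> entering N par (C t) w'.
Proof.
  intro H. split; [apply w'N|]. split.
  - unfold C; rewrite Tw'; auto.
  - exists a; split; auto. apply C_intro; auto. apply Ta.
Qed.

Lemma below_split j : forall w, w < N -> reach j w t -> C t w = false ->
  exists x, entering N par (C t) x /\ exists k, reach k w x.
Proof.
  induction j; intros w Hw Hr Cw.
  - apply reach0 in Hr. rewrite <- Hr, C_self in Cw; discriminate.
  - apply reachS in Hr; destruct Hr as [y [Ey Hr]].
    destruct (C t y) eqn:Cy.
    + exists w; split; [split; auto; split; auto; exists y; auto|exists 0; reflexivity].
    + assert (y < N) as Hy by (eapply (par_range _ _ Htree); eauto).
      destruct (IHj y Hy Hr Cy) as [x [Hx [k Hk]]]. exists x; split; auto.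
      exists (S k); apply reachS; eauto.
Qed.

Lemma ent_reach x : entering N par (C t) x -> exists k, reach k x t.
Proof.
  intros [_ [_ [y [Ey Cy]]]]. destruct (C_reach y Cy) as [j [Hj _]].
  exists (S j); apply reachS; eauto.
Qed.

Lemma C_disjoint w x k : C t w = true -> entering N par (C t) x -> reach k w x -> False.
Proof.
  intros Cw Hx Hk. destruct (C_reach w Cw) as [j [Hj Hall]].
  destruct (le_lt_dec k j) as [Hle|Hlt].
  - destruct Hx as [_ [Cx _]]. rewrite (Hall k x Hle Hk) in Cx; discriminate.
  - pose proof (reach_split _ _ _ _ _ _ Hj Hk (Nat.lt_le_incl _ _ Hlt)) as H1.
    destruct (ent_reach x Hx) as [k2 Hk2].
    pose proof (reach_trans _ _ _ _ _ _ H1 Hk2) as H3.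
    destruct (k - j) eqn:E; [lia|]. simpl in H3.
    apply (reach_cycle N par Htree (n0 + k2) t (Tin t Tt)); auto.
Qed.

Lemma C_preceq w : C t w = true -> preceq N par w t = true.
Proof.
  intro Cw. destruct (C_reach w Cw) as [j [Hj _]].
  apply (preceq_iff N par Htree); [apply Tin, C_T; auto|eauto].
Qed.

Definition SC i := Zsum (filter (C t) (seq 0 N)) (fun w => nu w i).

Lemma mom_indeg0 : (forall x, entering N par (C t) x -> False) ->
  forall i, momentum N par nu t i = SC i.
Proof.
  intros H i. unfold momentum, SC. f_equal. apply filter_ext_in. intros w Hw.
  apply in_seq in Hw. destruct (C t w) eqn:Cw; [apply C_preceq; auto|].
  destruct (preceq N par w t) eqn:Pw; auto. exfalso.
  apply (preceq_iff N par Htree) in Pw; [|lia]. destruct Pw as [k Hk].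
  destruct (below_split k w ltac:(lia) Hk Cw) as [x [Hx _]]. eapply H; eauto.
Qed.

Lemma mom_indeg1 x : entering N par (C t) x -> (forall y, entering N par (C t) y -> y = x) ->
  forall i, momentum N par nu t i = (SC i + momentum N par nu x i)%Z.
Proof.
  intros Hx Hu i. unfold momentum, SC.
  rewrite <- Zsum_filter_or.
  - f_equal. apply filter_ext_in. intros w Hw. apply in_seq in Hw.
    destruct (C t w) eqn:Cw; simpl; [apply C_preceq; auto|].
    destruct (ent_reach x Hx) as [kx Hkx].
    destruct (preceq N par w t) eqn:Pw.
    + apply (preceq_iff N par Htree) in Pw; [|lia]. destruct Pw as [k Hk].
      destruct (below_split k w ltac:(lia) Hk Cw) as [x' [Hx' [k' Hk']]].
      rewrite (Hu x' Hx') in Hk'. symmetry; apply (preceq_iff N par Htree); [lia|eauto].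
    + destruct (preceq N par w x) eqn:Px; auto.
      apply (preceq_iff N par Htree) in Px; [|lia]. destruct Px as [k Hk].
      rewrite <- Pw. apply (preceq_iff N par Htree); [lia|]. exists (k + kx). eapply reach_trans; eauto.
  - intros w Hw Cw Px. apply in_seq in Hw.
    apply (preceq_iff N par Htree) in Px; [|lia]. destruct Px as [k Hk].
    eapply C_disjoint; eauto.
Qed.

Lemma indeg_noent : indeg t = 0%Z -> forall x, entering N par (C t) x -> False.
Proof.
  unfold indeg. intros H x Hx. destruct (ent_char x Hx) as [[_ E]|E].
  - rewrite E, Nat.eqb_refl in H. lia.
  - assert (length (filter (Lin t) (seq 0 N)) = 0) as H0 by (destruct (Nat.eqb (topf a) t); lia).
    assert (x < N) by (destruct Hx; auto).
    rewrite (filter_len0 _ _ H0 x) in E; [discriminate|apply in_seq; lia].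
Qed.

Lemma indeg_oneent : indeg t = 1%Z -> exists x, entering N par (C t) x /\
  forall y, entering N par (C t) y -> y = x.
Proof.
  unfold indeg. intro H. destruct (Nat.eqb (topf a) t) eqn:Ea.
  - assert (length (filter (Lin t) (seq 0 N)) = 0) as H0 by lia.
    apply Nat.eqb_eq in Ea. exists w'. split; [apply ent_w'; auto|].
    intros y Hy. destruct (ent_char y Hy) as [[E _]|E]; auto.
    assert (y < N) by (destruct Hy; auto).
    rewrite (filter_len0 _ _ H0 y) in E; [discriminate|apply in_seq; lia].
  - assert (length (filter (Lin t) (seq 0 N)) = 1) as H1 by lia.
    destruct (filter_len1 _ _ H1) as [x0 [Hx0 [Lx0 Hu]]].
    exists x0. split; [apply ent_L; auto|].
    intros y Hy. destruct (ent_char y Hy) as [[_ E]|E].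
    + apply Nat.eqb_neq in Ea; congruence.
    + apply Hu; auto. apply in_seq. destruct Hy; lia.
Qed.


Lemma conn_to_t w : C t w = true -> conn par (C t) w t.
Proof.
  intro Cw. destruct (C_reach w Cw) as [j [Hj Hall]].
  assert (forall i z, i <= j -> reach i w z -> conn par (C t) w z) as K.
  { induction i; intros z Hi Hz.
    - apply reach0 in Hz; rewrite Hz. apply conn_refl; auto.
    - destruct (reach_Sr par i w z Hz) as [y [Hy Ey]].
      eapply conn_up; [apply IHi; [lia|exact Hy]| |exact Ey].
      unfold internalb; rewrite Ey, (Hall i y ltac:(lia) Hy), (Hall (S i) z Hi Hz); auto. }
  apply (K j); auto.
Qed.

Lemma C_connected : connected par (C t).
Proof.
  intros u v Hu Hv. eapply conn_trans; [apply conn_to_t; auto|]. apply conn_sym, conn_to_t; auto.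
Qed.

Lemma C_exiting : exiting N par (C t) t.
Proof.
  split; [apply Tin, Tt|]. split; [apply C_self|].
  destruct (par t) as [y|] eqn:E; [right; exists y; split; auto; apply par_t_notC; auto|left; auto].
Qed.

Lemma C_exiting_u v : exiting N par (C t) v -> v = t.
Proof.
  intros [_ [Cv H]]. destruct (Nat.eq_dec v t) as [|Hne]; auto. exfalso.
  destruct (C_par v Cv Hne) as [y [Ey Cy]]. destruct H as [H|[w [H1 H2]]]; congruence.
Qed.

Lemma other_top : exists o, T o = true /\ C t o = false.
Proof.
  destruct Hcl as [_ [_ [_ [[v0 [Hv0 Sv0]] _]]]].
  assert (isL v0 = true) as L0 by (unfold isL; rewrite Hv0, Sv0; simpl; apply Z.leb_le; lia).
  assert (isTop v0 = true) as T0 by (unfold isTop; rewrite L0; auto).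
  destruct (Nat.eq_dec t b) as [->|Hne].
  - exists v0. split; [apply isTop_T; auto|]. unfold C. rewrite (topf_top v0 T0).
    destruct (Nat.eqb v0 b) eqn:E; [apply Nat.eqb_eq in E; subst; rewrite isL_b in L0; discriminate|].
    apply andb_false_r.
  - exists b. split; [apply Tb|]. unfold C. rewrite (topf_top b isTop_b).
    destruct (Nat.eqb b t) eqn:E; [apply Nat.eqb_eq in E; congruence|]. apply andb_false_r.
Qed.

Lemma C_max (T' : nat -> bool) (q : Z) : in_nodes N T' -> lines_le par scale T' q ->
  (q < Z.of_nat p)%Z -> forall u v, conn par T' u v -> C t u = true -> C t v = true.
Proof.
  intros Hin' Hle' Hq u v Hc. induction Hc as [v Hv|u v w Hc IH Hi0 E|u v w Hc IH Hi0 E]; intro Cu; auto.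
  - specialize (IH Cu). specialize (Hle' v Hi0).
    destruct (Nat.eq_dec v t) as [->|Hne].
    + exfalso. destruct (Nat.eq_dec t b) as [->|Htb].
      * pose proof (scale_b_gt w E). lia.
      * assert (isL t = true) as Lt.
        { unfold isTop in Ht. apply orb_true_iff in Ht; destruct Ht as [H|H]; auto.
          apply Nat.eqb_eq in H; congruence. }
        unfold isL in Lt. apply andb_true_iff in Lt; destruct Lt as [_ Lt]. apply Z.leb_le in Lt. lia.
    + destruct (C_par v IH Hne) as [y [Ey Cy]]. congruence.
  - specialize (IH Cu). specialize (Hle' v Hi0).
    destruct (internal_T _ _ _ Hi0 E) as [T'v _].
    destruct (T v) eqn:Tv.
    + destruct (isTop v) eqn:Etv.
      * exfalso. destruct (Nat.eq_dec v b) as [->|Hvb].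
        -- destruct Hexi as [_ [_ [H|[w0 [H1 H2]]]]]; [congruence|].
           rewrite E in H1; inversion H1; subst. rewrite (C_T w0 IH) in H2; discriminate.
        -- assert (isL v = true) as Lv.
           { unfold isTop in Etv. apply orb_true_iff in Etv; destruct Etv as [H|H]; auto.
             apply Nat.eqb_eq in H; congruence. }
           unfold isL in Lv. apply andb_true_iff in Lv; destruct Lv as [_ Lv]. apply Z.leb_le in Lv. lia.
      * destruct (topf_par v w Tv Etv E) as [_ Ew]. apply C_intro; auto. rewrite <- Ew. apply C_topf; auto.
    + exfalso. assert (v = w') as ->.
      { apply Hentu. split; [apply Hin'; auto|split; auto]. exists w; split; auto. apply C_T; auto. }
      pose proof scale_w'_gt. lia.
Qed.

Lemma se_contra x : entering N par (C t) x -> (forall y, entering N par (C t) y -> y = x) ->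
  (forall i, i < d -> SC i = 0%Z) -> False.
Proof.
  intros Hx Hu H0.
  assert (se_cluster d N par nu scale (C t)) as Hse.
  { destruct (classic (exists v, In v (seq 0 N) /\ internalb par (C t) v = true)) as [Hi|Hni].
    - left. destruct (argmax_scale _ _ scale Hi) as [v0 [Hv0 [Iv0 Mv0]]].
      exists (scale v0).
      assert (Hq : (scale v0 < Z.of_nat p)%Z).
      { destruct (par v0) as [y|] eqn:E; [|unfold internalb in Iv0; rewrite E, andb_false_r in Iv0; discriminate].
        destruct (internal_T _ _ _ Iv0 E) as [C0 Cy].
        assert (v0 <> t) as Hne by (intro; subst; rewrite (par_t_notC y E) in Cy; discriminate).
        pose proof (C_nontop v0 C0 Hne) as Nt. unfold isTop, isL in Nt.
        apply orb_false_iff in Nt; destruct Nt as [Nt _].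
        unfold internalb in Nt. rewrite E, (C_T v0 C0), (C_T y Cy) in Nt. simpl in Nt.
        apply Z.leb_gt in Nt; auto. }
      assert (HleC : lines_le par scale (C t) (scale v0)).
      { intros v Hv. apply Mv0; auto.
        destruct (par v) as [y|] eqn:E; [|unfold internalb in Hv; rewrite E, andb_false_r in Hv; discriminate].
        destruct (internal_T _ _ _ Hv E) as [Cv _]. apply in_seq. split; [lia|]. apply Tin, C_T; auto. }
      split; [split; [intros v Hv; apply Tin, C_T; auto|split; [apply C_connected|split; [exact HleC|]]]|].
      + split; [exists v0; auto|].
        intros T' Hin' Hsub Hco' Hle' v Hv.
        apply (C_max T' (scale v0) Hin' Hle' Hq t v); [apply Hco'; auto; apply Hsub, C_self|apply C_self].
      + exists x. split; auto. split; auto. exists t. split; [apply C_exiting|]. split; [apply C_exiting_u|].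
        intros i Hi2. rewrite (mom_indeg1 x Hx Hu i), H0; auto.
    - right. exists t. split; [apply Tin, Tt|].
      assert (forall z, C t z = true <-> z = t) as Hiff.
      { intro z; split; [|intros ->; apply C_self].
        intro Cz. destruct (Nat.eq_dec z t) as [|Hne]; auto. exfalso.
        destruct (C_par z Cz Hne) as [y [Ey Cy]]. apply Hni. exists z.
        split; [apply in_seq; split; [lia|apply Tin, C_T; auto]|]. unfold internalb; rewrite Ey, Cz, Cy; auto. }
      split; auto. split.
      + intros i Hi. rewrite <- (H0 i Hi). unfold SC. symmetry. apply (Zsum_single _ t (fun w => nu w i)).
        * apply in_seq; split; [lia|apply Tin, Tt].
        * apply seq_NoDup.
        * intros z _; apply Hiff.
      + exists x; split; auto. }
  destruct other_top as [o [To Co]].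
  assert (C t o = true) as Co' by (apply (Hren (C t) Hse); auto; apply C_T).
  congruence.
Qed.

End OneTop.
Variable B : Z.
Hypothesis HS1 : forall u, u < N -> (Z.of_nat p <= scale u)%Z ->
  (B <= 2 * norm1 d (momentum N par nu u))%Z.
Hypothesis HS2 : forall u v (mu : vec), u < N -> v < N -> (Z.of_nat p <= scale u)%Z -> (Z.of_nat p <= scale v)%Z ->
  (forall i, (i < d)%nat -> (mu i = momentum N par nu u i - momentum N par nu v i)%Z) ->
  vnonzero d mu -> (B <= 2 * norm1 d mu)%Z.

Definition KC t := Zsum (filter (C t) (seq 0 N)) (fun w => norm1 d (nu w)).

Lemma isL_scale v : isL v = true -> (Z.of_nat p <= scale v)%Z.
Proof. unfold isL; intro H; apply andb_true_iff in H; destruct H as [_ H]; apply Z.leb_le; auto. Qed.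

Lemma isL_N v : isL v = true -> v < N.
Proof. unfold isL, internalb; intro H; apply andb_true_iff in H; destruct H as [H _].
  apply andb_true_iff in H; destruct H as [H _]; apply Tin; auto. Qed.

Lemma top_line t : isTop t = true -> exists u, u < N /\ (Z.of_nat p <= scale u)%Z /\
  forall i, i < d -> momentum N par nu t i = momentum N par nu u i.
Proof.
  intro Ht. destruct (Nat.eq_dec t b) as [->|Hne].
  - exists w'. split; [apply w'N|]. split; [pose proof scale_w'_gt; lia|]. apply Hveq.
  - exists t. assert (isL t = true) as L.
    { unfold isTop in Ht. apply orb_true_iff in Ht; destruct Ht as [H|H]; auto. apply Nat.eqb_eq in H; congruence. }
    split; [apply isL_N; auto|split; [apply isL_scale; auto|auto]].
Qed.

Lemma KC_bound t : isTop t = true -> (indeg t <= 1)%Z -> (B <= 2 * KC t)%Z.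
Proof.
  intros Ht Hd. destruct (top_line t Ht) as [u [Hu1 [Hu2 Hu3]]].
  assert (2 * norm1 d (fun i => SC t i) <= 2 * KC t)%Z as HK.
  { unfold KC, SC. pose proof (norm1_sum d (filter (C t) (seq 0 N)) nu). lia. }
  assert (0 <= indeg t)%Z as Hd0 by (unfold indeg; destruct (Nat.eqb (topf a) t); lia).
  destruct (Z.eq_dec (indeg t) 0) as [H0|H1].
  - pose proof (mom_indeg0 t Ht (indeg_noent t H0)) as E.
    specialize (HS1 u Hu1 Hu2).
    rewrite (norm1_ext d (momentum N par nu u) (fun i => SC t i)) in HS1; [lia|].
    intros i Hi; rewrite <- Hu3, E; auto.
  - destruct (indeg_oneent t Ht ltac:(lia)) as [x [Hx Hxu]].
    destruct (classic (forall i, i < d -> SC t i = 0%Z)) as [Hz|Hnz].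
    + exfalso; eapply se_contra; eauto.
    + assert (vnonzero d (fun i => SC t i)) as Hvn.
      { apply not_all_ex_not in Hnz; destruct Hnz as [i Hi]. exists i. tauto. }
      assert (x < N /\ (Z.of_nat p <= scale x)%Z) as [Hx1 Hx2].
      { destruct (ent_char t x Hx) as [[-> _]|L].
        - split; [apply w'N|pose proof scale_w'_gt; lia].
        - unfold Lin in L; apply andb_true_iff in L; destruct L as [L _]. split; [apply isL_N|apply isL_scale]; auto. }
      pose proof (HS2 u x (fun i => SC t i) Hu1 Hx1 Hu2 Hx2) as H2.
      assert (B <= 2 * norm1 d (fun i => SC t i))%Z; [|lia].
      apply H2; auto. intros i Hi. rewrite <- Hu3 by auto. rewrite (mom_indeg1 t Ht x Hx Hxu i). lia.
Qed.

Hypothesis HB : (0 <= B)%Z.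

Definition tops := filter isTop (seq 0 N).

Lemma tops_NoDup : NoDup tops.
Proof. apply NoDup_filter, seq_NoDup. Qed.

Lemma in_tops w : T w = true -> In (topf w) tops.
Proof.
  intro Hw. destruct (topf_isTop w Hw) as [H1 H2]. apply filter_In. split; auto.
  apply in_seq; split; [lia|apply Tin; auto].
Qed.

Lemma count_main : (B * Z.of_nat (length tops) <= 4 * Kval d N nu T)%Z.
Proof.
  assert (Hper : forall t, In t tops -> (B <= 4 * KC t + B * (indeg t - 1))%Z).
  { intros t Ht. apply filter_In in Ht; destruct Ht as [_ Ht].
    assert (0 <= KC t)%Z as HK by (apply Zsum_nonneg; intros; apply norm1_nonneg).
    assert (0 <= indeg t)%Z as Hd0 by (unfold indeg; destruct (Nat.eqb (topf a) t); lia).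
    destruct (Z_le_gt_dec (indeg t) 1) as [Hle|Hgt].
    - pose proof (KC_bound t Ht Hle). nia.
    - nia. }
  assert (HsK : Zsum tops KC = Kval d N nu T).
  { unfold KC, C, Kval. apply fiber; [apply tops_NoDup|]. intros x _ Hx. apply in_tops; auto. }
  assert (HsL : Zsum tops (fun t => Z.of_nat (length (filter (Lin t) (seq 0 N)))) =
                Z.of_nat (length (filter isL (seq 0 N)))).
  { rewrite len_Zsum. rewrite (Zsum_ext _ _ (fun t => Zsum (filter (Lin t) (seq 0 N)) (fun _ => 1%Z)))
      by (intros; apply len_Zsum).
    unfold Lin. apply fiber; [apply tops_NoDup|]. intros x _ Hx.
    assert (Hx' := Hx). unfold isL in Hx'. apply andb_true_iff in Hx'; destruct Hx' as [Hx' _].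
    unfold parx. destruct (par x) as [y|] eqn:E; [|unfold internalb in Hx'; rewrite E, andb_false_r in Hx'; discriminate].
    destruct (internal_T _ _ _ Hx' E) as [_ Ty]. apply in_tops; auto. }
  assert (Hsa : Zsum tops (fun t => if Nat.eqb (topf a) t then 1%Z else 0%Z) = 1%Z).
  { apply Zsum_indic; [apply tops_NoDup|apply in_tops, Ta]. }
  assert (Hlen : Z.of_nat (length tops) = (Z.of_nat (length (filter isL (seq 0 N))) + 1)%Z).
  { unfold tops, isTop. rewrite !len_Zsum. rewrite Zsum_filter_or.
    - f_equal. apply (Zsum_single _ b (fun _ => 1%Z)).
      + apply in_seq; split; [lia|apply Tin, Tb].
      + apply seq_NoDup.
      + intros z _; apply Nat.eqb_eq.
    - intros w _ H1 H2. apply Nat.eqb_eq in H2; subst. rewrite isL_b in H1; discriminate. }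
  assert (Hsi : Zsum tops indeg = Z.of_nat (length tops)).
  { unfold indeg. rewrite Zsum_add, HsL, Hsa. lia. }
  pose proof (Zsum_le tops (fun _ => B) (fun t => 4 * KC t + B * (indeg t - 1))%Z Hper) as Hs.
  rewrite Zsum_const, Zsum_add, Zsum_scale in Hs.
  assert (E : Zsum tops (fun t => B * (indeg t - 1))%Z = (B * Zsum tops indeg - B * Z.of_nat (length tops))%Z).
  { rewrite (Zsum_ext _ (fun t => B * (indeg t - 1))%Z (fun t => B * indeg t + (- B) * 1)%Z) by (intros; lia).
    rewrite Zsum_add, !Zsum_scale, <- len_Zsum. lia. }
  rewrite E, HsK, Hsi in Hs. lia.
Qed.

Lemma Nlines_tops : (Z.of_nat (Nlines_ge N par scale T p) + 1 = Z.of_nat (length tops))%Z.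
Proof.
  assert (Hlen : Z.of_nat (length tops) = (Z.of_nat (length (filter isL (seq 0 N))) + 1)%Z).
  { unfold tops, isTop. rewrite !len_Zsum. rewrite Zsum_filter_or.
    - f_equal. apply (Zsum_single _ b (fun _ => 1%Z)).
      + apply in_seq; split; [lia|apply Tin, Tb].
      + apply seq_NoDup.
      + intros z _; apply Nat.eqb_eq.
    - intros w _ H1 H2. apply Nat.eqb_eq in H2; subst. rewrite isL_b in H1; discriminate. }
  rewrite Hlen. reflexivity.
Qed.

End Comb.
Close Scope nat_scope.
Open Scope R_scope.

Lemma Rmin_list_le (l : list R) x : In x l -> Rmin_list l <= x.
Proof.
  destruct l as [|y l]; [intros []|]. simpl.
  assert (forall z, (z = y \/ In z l) -> fold_right Rmin y l <= z) as K.
  { induction l as [|u l IH]; simpl; intros z [Hz|Hz].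
    - subst; lra.
    - destruct Hz.
    - pose proof (IH z (or_introl Hz)). pose proof (Rmin_r u (fold_right Rmin y l)). lra.
    - destruct Hz as [Hz|Hz].
      + subst. apply Rmin_l.
      + pose proof (IH z (or_intror Hz)). pose proof (Rmin_r u (fold_right Rmin y l)). lra. }
  intros [H|H]; apply K; auto.
Qed.

Lemma fold_Rmin_in (y : R) (l : list R) : In (fold_right Rmin y l) (y :: l).
Proof.
  induction l as [|u l IH]; [left; reflexivity|].
  change (fold_right Rmin y (u :: l)) with (Rmin u (fold_right Rmin y l)).
  unfold Rmin at 1. destruct (Rle_dec u (fold_right Rmin y l)).
  - right; left; reflexivity.
  - destruct IH as [H|H]; [left; auto|right; right; auto].
Qed.

Lemma Rmin_list_in (l : list R) : l <> [] -> In (Rmin_list l) l.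
Proof. destruct l as [|y l]; [congruence|]. intros _. apply fold_Rmin_in. Qed.

Lemma Zsum_single_le (l : list nat) (f : nat -> Z) i :
  In i l -> (forall x, (0 <= f x)%Z) -> (f i <= Zsum l f)%Z.
Proof.
  induction l as [|x l IH]; intros Hi H; [destruct Hi|]. rewrite Zsum_cons.
  destruct Hi as [->|Hi].
  - pose proof (Zsum_nonneg l f H). lia.
  - specialize (IH Hi H). specialize (H x). lia.
Qed.

Lemma abs_le_norm1 d (mu : vec) i : (i < d)%nat -> (Z.abs (mu i) <= norm1 d mu)%Z.
Proof.
  intro Hi. unfold norm1. apply (Zsum_single_le _ (fun i => Z.abs (mu i))).
  - apply in_seq; lia.
  - intros; apply Z.abs_nonneg.
Qed.

Lemma vnonzero_norm1 d mu : vnonzero d mu -> (1 <= norm1 d mu)%Z.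
Proof. intros [i [Hi Hne]]. pose proof (abs_le_norm1 d mu i Hi). lia. Qed.

Lemma Rsum_ext (l : list nat) (f g : nat -> R) : (forall x, In x l -> f x = g x) -> Rsum l f = Rsum l g.
Proof. intro H; induction l as [|x l IH]; simpl; auto. rewrite H by (left; auto). f_equal. apply IH; intros; apply H; right; auto. Qed.

Lemma Rsum_minus (l : list nat) (f g : nat -> R) : Rsum l (fun x => f x - g x) = Rsum l f - Rsum l g.
Proof. induction l; simpl; [lra|]. rewrite IHl. lra. Qed.

Lemma dot_ext d omega (mu mu' : vec) : (forall i, (i < d)%nat -> mu i = mu' i) -> dot d omega mu = dot d omega mu'.
Proof. intro H. unfold dot. apply Rsum_ext. intros i Hi. apply in_seq in Hi. rewrite H; auto; lia. Qed.

Lemma dot_minus d omega (mu u v : vec) : (forall i, (i < d)%nat -> mu i = (u i - v i)%Z) ->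
  dot d omega mu = dot d omega u - dot d omega v.
Proof.
  intro H. unfold dot. rewrite <- Rsum_minus. apply Rsum_ext. intros i Hi. apply in_seq in Hi.
  rewrite H by lia. rewrite minus_IZR. ring.
Qed.

Lemma in_Zrange B z : (0 <= B)%Z -> (Z.abs z <= B)%Z -> In z (Zrange B).
Proof.
  intros HB Hz. unfold Zrange. apply in_map_iff. exists (Z.to_nat (z + B)). split.
  - rewrite Z2Nat.id by lia. lia.
  - apply in_seq. split; [lia|]. apply Nat2Z.inj_lt. rewrite !Z2Nat.id by lia. lia.
Qed.

Lemma in_boxlists B : (0 <= B)%Z -> forall d (l : list Z), length l = d ->
  (forall z, In z l -> (Z.abs z <= B)%Z) -> In l (boxlists d B).
Proof.
  intros HB d; induction d; intros l Hl Hz.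
  - destruct l; simpl in *; [auto|lia].
  - destruct l as [|z l]; simpl in Hl; [lia|]. simpl. apply in_flat_map. exists z. split.
    + apply in_Zrange; auto. apply Hz; left; auto.
    + apply in_map. apply IHd; [lia|]. intros; apply Hz; right; auto.
Qed.

Lemma vec_of_list_map d (mu : vec) i : (i < d)%nat -> vec_of_list (map mu (seq 0 d)) i = mu i.
Proof.
  intro Hi. unfold vec_of_list. rewrite (nth_indep _ 0%Z (mu 0%nat)) by (rewrite length_map, length_seq; auto).
  rewrite map_nth, seq_nth; auto.
Qed.

Lemma alpha_le d omega M (mu : vec) : vnonzero d mu -> (norm1 d mu <= 2 ^ Z.of_nat M)%Z ->
  alpha d omega M <= Rabs (dot d omega mu).
Proof.
  intros Hnz Hn. set (l := map mu (seq 0 d)).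
  assert (Hag : forall i, (i < d)%nat -> vec_of_list l i = mu i) by (intros; apply vec_of_list_map; auto).
  unfold alpha. rewrite (dot_ext d omega mu (vec_of_list l)) by (intros; rewrite Hag; auto).
  apply Rmin_list_le. apply (in_map (fun nu => Rabs (dot d omega nu))). unfold alpha_candidates. apply filter_In. split.
  - apply (in_map vec_of_list). apply in_boxlists; [lia|unfold l; rewrite length_map, length_seq; auto|].
    intros z Hz. unfold l in Hz. apply in_map_iff in Hz. destruct Hz as [i [<- Hi]]. apply in_seq in Hi.
    pose proof (abs_le_norm1 d mu i ltac:(lia)). lia.
  - apply andb_true_iff. split.
    + destruct Hnz as [i [Hi Hne]]. unfold nonzerob. apply existsb_exists. exists i.
      split; [apply in_seq; lia|]. rewrite Hag by auto. destruct (Z.eqb_spec (mu i) 0); auto.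
    + apply Z.leb_le. rewrite (norm1_ext d _ mu) by auto. auto.
Qed.

Lemma alpha_anti d omega a b : (a <= b)%nat -> 0 < alpha d omega a -> alpha d omega b <= alpha d omega a.
Proof.
  intros Hab Hpos. unfold alpha at 2.
  set (L := map (fun nu => Rabs (dot d omega nu)) (alpha_candidates d a)).
  assert (L <> []) as HL by (intro E; unfold alpha in Hpos; fold L in Hpos; rewrite E in Hpos; simpl in Hpos; lra).
  pose proof (Rmin_list_in L HL) as H. unfold L in H at 2.
  apply in_map_iff in H. destruct H as [mu [Hmu Hin]]. rewrite <- Hmu.
    unfold alpha_candidates in Hin. apply filter_In in Hin. destruct Hin as [_ Hf].
    apply andb_true_iff in Hf. destruct Hf as [Hf1 Hf2].
    apply alpha_le.
    + unfold nonzerob in Hf1. apply existsb_exists in Hf1. destruct Hf1 as [i [Hi Hne]].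
      apply in_seq in Hi. exists i. split; [lia|]. destruct (Z.eqb_spec (mu i) 0); simpl in Hne; [discriminate|auto].
    + apply Z.leb_le in Hf2. eapply Z.le_trans; [exact Hf2|]. apply Z.pow_le_mono_r; lia.
Qed.

Lemma m_mono d omega m : is_mseq d omega m -> forall a b, (a <= b)%nat -> (m a <= m b)%nat.
Proof.
  intros [_ Hs] a b Hab. induction Hab; auto.
  destruct (Hs m0) as [q [_ E]]. lia.
Qed.

Lemma small_div d omega chi m p s x : bryuno d omega -> is_mseq d omega m -> cutoff chi ->
  (1 <= p)%nat -> (p <= s)%nat -> Psi chi d omega m s x <> 0 ->
  Rabs x < alpha d omega (m (p - 1)%nat) / 4.
Proof.
  intros [Hpos _] Hms Hcut Hp Hs Hpsi.
  destruct s as [|s']; [lia|]. unfold Psi in Hpsi.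
  assert (chi_n chi d omega m s' x <> 0) as Hc by (intro E; apply Hpsi; rewrite E; ring).
  unfold chi_n in Hc. destruct Hcut as [_ [_ [_ [_ H0]]]].
  assert (Rabs (4 * x / alpha d omega (m s')) < 1) as H1.
  { destruct (Rlt_le_dec (Rabs (4 * x / alpha d omega (m s'))) 1); auto. exfalso; apply Hc, H0; auto. }
  specialize (Hpos (m s')) as Ha.
  assert (Rabs x < alpha d omega (m s') / 4) as H2.
  { unfold Rdiv in H1. rewrite Rabs_mult, Rabs_mult, Rabs_inv, (Rabs_right 4), (Rabs_right (alpha _ _ _)) in H1 by lra.
    apply Rmult_lt_compat_r with (r := alpha d omega (m s')) in H1; [|lra].
    rewrite Rmult_assoc, Rinv_l, Rmult_1_r, Rmult_1_l in H1 by lra. lra. }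
  assert (alpha d omega (m s') <= alpha d omega (m (p - 1)%nat)).
  { apply alpha_anti; [apply (m_mono d omega m Hms); clear -Hs; lia|apply Hpos]. }
  lra.
Qed.

Lemma big_lemma d omega m p (mu : vec) : bryuno d omega -> is_mseq d omega m -> vnonzero d mu ->
  ((1 <= p)%nat -> Rabs (dot d omega mu) < alpha d omega (m (p - 1)%nat) / 2) ->
  (2 ^ Z.of_nat (m p) <= 2 * norm1 d mu)%Z.
Proof.
  intros [Hpos _] [Hm0 Hms] Hnz Hsd.
  destruct p as [|p'].
  - rewrite Hm0. pose proof (vnonzero_norm1 d mu Hnz). change (Z.of_nat 0) with 0%Z. rewrite Z.pow_0_r. lia.
  - destruct (Hms p') as [q [[Hq _] E]]. specialize (Hsd ltac:(lia)).
    replace (S p' - 1)%nat with p' in Hsd by lia. rewrite E.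
    replace (Z.of_nat (m p' + q + 1)) with (Z.of_nat (m p' + q) + 1)%Z by lia.
    rewrite Z.pow_add_r by lia.
    destruct (Z_le_gt_dec (2 ^ Z.of_nat (m p' + q) * 2 ^ 1) (2 * norm1 d mu)) as [H|H]; auto.
    exfalso. assert (norm1 d mu <= 2 ^ Z.of_nat (m p' + q))%Z as Hn by (rewrite Z.pow_1_r in H; lia).
    pose proof (alpha_le d omega (m p' + q) mu Hnz Hn). lra.
Qed.

Theorem lemma3p5 (d : nat) (omega : nat -> R) (chi : R -> R) (m : nat -> nat)
  (N : nat) (par : nat -> option nat) (nu : nat -> vec) (scale : nat -> Z)
  (T : nat -> bool) (n : nat) :
  bryuno d omega -> is_mseq d omega m -> cutoff chi ->
  labelled_tree d N par nu scale ->
  (forall v, (v < N)%nat -> (0 <= scale v)%Z ->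
     Psi chi d omega m (Z.to_nat (scale v)) (dot d omega (momentum N par nu v)) <> 0) ->
  se_cluster_on_scale d N par nu scale T (Z.of_nat n) ->
  renormalised d N par nu scale T ->
  forall p, (p <= n)%nat ->
    INR (Nlines_ge N par scale T p) <=
    powerRZ 2 (- (Z.of_nat (m p) - 2)) * IZR (Kval d N nu T).
Proof.
  intros Hbry Hms Hcut Hlab Hpsi Hse Hren p Hp.
  destruct Hse as [Hcl [w' [Hent [Hentu [b [Hexi [Hexu Hveq]]]]]]].
  assert (Htree := proj1 Hlab).
  assert (exists a, par w' = Some a) as [a Ha] by (destruct Hent as [_ [_ [a [Ha _]]]]; eauto).
  set (B := (2 ^ Z.of_nat (m p))%Z).
  assert (HBpos : (0 < B)%Z) by (unfold B; apply Z.pow_pos_nonneg; lia).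
  assert (HB : (0 <= B)%Z) by lia.
  assert (Hapos := proj1 Hbry).
  assert (Hnz : forall u, (u < N)%nat -> (0 <= scale u)%Z -> vnonzero d (momentum N par nu u)).
  { intros u Hu Hs. destruct Hlab as [_ [_ H3]]. destruct (H3 u Hu) as [H4 _].
    destruct (classic (vnonzero d (momentum N par nu u))) as [H|H]; auto. exfalso.
    assert (vzero d (momentum N par nu u)) as Hz.
    { intros i Hi. destruct (Z.eq_dec (momentum N par nu u i) 0); auto. exfalso; apply H; exists i; auto. }
    specialize (H4 Hz). lia. }
  assert (Hsd : forall u, (u < N)%nat -> (Z.of_nat p <= scale u)%Z -> (1 <= p)%nat ->
             Rabs (dot d omega (momentum N par nu u)) < alpha d omega (m (p - 1)%nat) / 4).
  { intros u Hu Hs Hp1. apply (small_div d omega chi m p (Z.to_nat (scale u))); auto; [lia|].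
    apply Hpsi; auto; lia. }
  assert (HS1 : forall u, (u < N)%nat -> (Z.of_nat p <= scale u)%Z ->
    (B <= 2 * norm1 d (momentum N par nu u))%Z).
  { intros u Hu Hs. apply (big_lemma d omega m p); auto; [apply Hnz; auto; lia|].
    intro Hp1. specialize (Hsd u Hu Hs Hp1). specialize (Hapos (m (p - 1)%nat)). lra. }
  assert (HS2 : forall u v (mu : vec), (u < N)%nat -> (v < N)%nat -> (Z.of_nat p <= scale u)%Z ->
    (Z.of_nat p <= scale v)%Z ->
    (forall i, (i < d)%nat -> (mu i = momentum N par nu u i - momentum N par nu v i)%Z) ->
    vnonzero d mu -> (B <= 2 * norm1 d mu)%Z).
  { intros u v mu Hu Hv Hsu Hsv Hmu Hmnz. apply (big_lemma d omega m p); auto.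
    intro Hp1. rewrite (dot_minus d omega mu _ _ Hmu).
    pose proof (Hsd u Hu Hsu Hp1). pose proof (Hsd v Hv Hsv Hp1).
    pose proof (Rabs_triang (dot d omega (momentum N par nu u)) (- dot d omega (momentum N par nu v))) as Ht.
    rewrite Rabs_Ropp in Ht. unfold Rminus. lra. }
  pose proof (count_main d N par nu scale T n p b w' a Htree Hlab Hcl Hent Hentu Hexi Hexu Hveq Hren Hp Ha
                B HS1 HS2 HB) as HC.
  pose proof (Nlines_tops N par scale T n p b Hcl Hexi Hp) as HN.
  rewrite <- HN in HC.
  set (Np := Nlines_ge N par scale T p) in *.
  set (K := Kval d N nu T) in *.
  assert (HZ : (B * Z.of_nat Np <= 4 * K)%Z) by lia.
  apply IZR_le in HZ. rewrite !mult_IZR in HZ.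
  replace (- (Z.of_nat (m p) - 2))%Z with (2 + - Z.of_nat (m p))%Z by lia.
  rewrite powerRZ_add by lra. rewrite powerRZ_neg', <- pow_powerRZ.
  replace (2 ^ m p) with (IZR B) by (unfold B; rewrite <- pow_IZR; reflexivity).
  rewrite INR_IZR_INZ.
  assert (0 < IZR B) by (apply IZR_lt; auto).
  simpl powerRZ.
  apply Rmult_le_reg_l with (r := IZR B); auto.
  replace (IZR B * (2 * (2 * 1) * / IZR B * IZR K)) with (4 * IZR K) by (field; lra).
  lra.
Qed.
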